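(* Let $(\varphi_\alpha)_{\alpha>0}$ be a family of functions $\varphi_\alpha\colon\mathbb{R}\to\mathbb{R}$, each monotonically increasing (non-decreasing) and nonexpansive (i.e. $1$-Lipschitz) with $\varphi_\alpha(0)=0$. Then the following are equivalent: (1) for all $x\in\mathbb{R}$, $\lim_{\alpha\to 0}\varphi_\alpha(x)=x$; (2) for all $x\in\mathbb{R}$, $\lim_{\alpha\to0}\varphi_\alpha^{-1}(x)=\{x\}$.
   Context: For $x\in\mathbb{R}$, $\varphi_\alpha^{-1}(x)=\{y\in\mathbb{R}:\varphi_\alpha(y)=x\}$ denotes the (possibly empty) preimage. The statement $\lim_{\alpha\to0}\varphi_\alpha^{-1}(x)=\{x\}$ means by definition $\lim_{\alpha\to 0}\sup_{y\in\varphi_\alpha^{-1}(x)}|y-x|=0$, with the convention $\sup_{y\in\emptyset}|y-x|:=\infty$. *)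

(* Defs.v *)
From HB Require Import structures.
From mathcomp Require Import all_boot all_order all_algebra.
From mathcomp Require Import all_classical all_reals all_analysis.
Set Implicit Arguments. Unset Strict Implicit. Unset Printing Implicit Defensive.
Import Order.TTheory GRing.Theory Num.Theory.
Import numFieldNormedType.Exports.
Local Open Scope classical_set_scope.
Local Open Scope ring_scope.

Definition preim_pt (R : realType) (f : R -> R) (x : R) : set R :=
  [set y | f y = x].

Definition preim_dev (R : realType) (f : R -> R) (x : R) : \bar R :=
  if pselect (preim_pt f x !=set0) then
    ereal_sup [set (`|y - x|)%:E | y in preim_pt f x]
  else +oo%E.

(* Main.v *)
Require Import Defs.
From HB Require Import structures.
From mathcomp Require Import all_boot all_order all_algebra.
From mathcomp Require Import all_classical all_reals all_analysis.
From mathcomp Require Import lra.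
Import Order.TTheory GRing.Theory Num.Theory.
Import numFieldNormedType.Exports.
Local Open Scope classical_set_scope.
Local Open Scope ring_scope.

Lemma dev_bounds (R : realType) (f : R -> R) (x eps : R) :
  (exists y, f y = x) -> (forall y, f y = x -> `|y - x| <= eps) ->
  (0 <= preim_dev f x)%E /\ (preim_dev f x <= eps%:E)%E.
Proof.
move=> [y0 hy0] hb; rewrite /preim_dev.
destruct (pselect _) as [hp|hn]; last by exfalso; apply: hn; exists y0.
split.
  apply: le_trans (ereal_sup_ubound _); last by exists y0.
  by rewrite lee_fin.
apply: ge_ereal_sup => _ [y hy <-]; rewrite lee_fin; exact: hb.
Qed.

Lemma dev_elem (R : realType) (f : R -> R) (x : R) :
  preim_dev f x \is a fin_num ->
  exists y, f y = x /\ ((`|y - x|)%:E <= preim_dev f x)%E.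
Proof.
rewrite /preim_dev; destruct (pselect _) as [[y hy]|hn]; last by [].
exists y; split => //; apply: ereal_sup_ubound; by exists y.
Qed.

Lemma lip_cont (R : realType) (f : R -> R) :
  (forall x y, `|f x - f y| <= `|x - y|) -> continuous f.
Proof.
move=> hl z; apply/cvgrPdist_le => e e0.
have := @cvgr_dist_le _ R^o _ (nbhs z) _ id z cvg_id e e0.
move=> h; near=> t; apply: le_trans (hl _ _) _; near: t; exact: h.
Unshelve. all: by end_near. Qed.

Theorem lemma2p2 (R : realType) (phi : R -> R -> R)
  (hmono : forall a : R, 0 < a -> forall x y : R, x <= y -> phi a x <= phi a y)
  (hlip : forall a : R, 0 < a -> forall x y : R, `|phi a x - phi a y| <= `|x - y|)
  (h0 : forall a : R, 0 < a -> phi a 0 = 0) :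
  (forall x : R, phi a x @[a --> 0^'+] --> x) <->
  (forall x : R, preim_dev (phi a) x @[a --> 0^'+] --> 0%E).
Proof.
split.
- move=> H x.
  have key : forall e : R, 0 < e -> \forall a \near 0^'+,
      (exists y, phi a y = x) /\ (forall y, phi a y = x -> `|y - x| <= e).
    move=> e e0.
    have h1 := @cvgr_dist_lt _ R^o _ _ _ _ _ (H (x + e)) e e0.
    have h2 := @cvgr_dist_lt _ R^o _ _ _ _ _ (H (x - e)) e e0.
    near=> a.
    have pa : 0 < a by near: a; exact: nbhs_right_gt.
    have hp : `|x + e - phi a (x + e)| < e by near: a; exact: h1.
    have hm : `|x - e - phi a (x - e)| < e by near: a; exact: h2.
    move: hp hm; rewrite !ltr_norml => /andP[hp1 hp2] /andP[hm1 hm2].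
    split.
      have := @IVT R (phi a) (x - e) (x + e) x.
      case.
      + lra.
      + apply: continuous_subspaceT; apply: lip_cont; exact: hlip.
      + apply/andP; split.
          by rewrite ge_min; apply/orP; left; lra.
        by rewrite le_max; apply/orP; right; lra.
      by move=> c _ hc; exists c.
    move=> y hy; rewrite ler_norml; apply/andP; split.
      have : ~ (y < x - e).
        move=> hlt; have := hmono a pa _ _ (ltW hlt); lra.
      move/negP; rewrite -leNgt; lra.
    have : ~ (x + e < y).
      move=> hlt; have := hmono a pa _ _ (ltW hlt); lra.
    move/negP; rewrite -leNgt; lra.
  apply/fine_cvgP; split.
    have := key 1 ltr01; apply: filterS => a [ex hb].
    have [l u] := dev_bounds _ _ _ _ ex hb.
    rewrite ge0_fin_numE //; exact: le_lt_trans u (ltry _).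
  apply/cvgrPdist_le => e e0.
  have := key e e0; apply: filterS => a [ex hb].
  have [l u] := dev_bounds _ _ _ _ ex hb.
  move: l u; rewrite /=; case: (preim_dev (phi a) x) => [r| |] //.
  rewrite !lee_fin => l u /=; rewrite sub0r normrN ger0_norm //.
- move=> H x.
  move/fine_cvgP: (H x) => [hfin hc].
  apply/cvgrPdist_le => e e0.
  have hc' := @cvgr_dist_le _ R^o _ _ _ _ _ hc e e0.
  near=> a.
  have pa : 0 < a by near: a; exact: nbhs_right_gt.
  have fa : preim_dev (phi a) x \is a fin_num by near: a; exact: hfin.
  have ca : `|0 - fine (preim_dev (phi a) x)| <= e by near: a; apply: hc'.
  have [y [hy hle]] := dev_elem _ _ _ fa.
  move: hle; rewrite -(fineK fa) lee_fin => hle.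
  move: ca; rewrite /= sub0r normrN => ca.
  rewrite -{1}hy distrC.
  apply: le_trans (hlip a pa x y) _; rewrite distrC.
  apply: le_trans hle _; apply: le_trans (ler_norm _) ca.
Unshelve. all: by end_near. Qed.
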